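(* Let $\hat\phi_{\mathrm{CS}}(\cdot)=\mathbb{1}(s(\cdot)>t_{\mathrm{CS}})$ be a given classifier, where the scoring function $s:\mathcal{X}\to\mathbb{R}$ and threshold $t_{\mathrm{CS}}$ are regarded as fixed. Let $F$ be the cumulative distribution function of $s(X^0)$, where $X^0\sim X\mid(Y=0)$. Apply $s$ to a left-out class-0 sample of size $m$ (independent of $s$ and $t_{\mathrm{CS}}$), giving scores $T_1,\dots,T_m$, with $k$-th order statistic $T_{(k)}$. If $T_{(1)}\le t_{\mathrm{CS}}$, let $k_s^*=\max\{k\in\{1,\dots,m\}:T_{(k)}\le t_{\mathrm{CS}}\}$ and define the surrogate classifier $\hat\phi_{k_s^*}(\cdot)=\mathbb{1}(s(\cdot)>T_{(k_s^* )})$. Then $R_0(\hat\phi_{k_s^*})\ge R_0(\hat\phi_{\mathrm{CS}})$, and for $\alpha\in(0,1)$, $$\mathbb{P}_m\big(R_0(\hat\phi_{k_s^*})>\alpha\big)\begin{cases}=1 & \text{if } t_{\mathrm{CS}}<F^{-1}(1-\alpha),\\ \le (2-\alpha-F(t_{\mathrm{CS}}))^m-(1-F(t_{\mathrm{CS}}))^m & \text{if } t_{\mathrm{CS}}\ge F^{-1}(1-\alpha),\end{cases}$$ where $\mathbb{P}_m$ is the probability with respect to the randomness of the left-out class-0 sample of size $m$.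
   Context: $(X,Y)$ is a random pair with $X\in\mathcal{X}\subset\mathbb{R}^d$ and $Y\in\{0,1\}$. For a classifier $\phi:\mathcal{X}\to\{0,1\}$, $R_0(\phi)=\mathbb{P}(\phi(X)=1\mid Y=0)$ is the population type I error (for a classifier depending on the left-out sample, this probability is over an independent new $X$ given $Y=0$, with the sample held fixed). The left-out scores $T_1,\dots,T_m$ are i.i.d. with distribution function $F$.
   Formalization: $\mathbb{P}_m(R_0(\hat\phi_{k_s^*})>\alpha)$ is the probability of the joint event $T_{(1)}\le t_{\mathrm{CS}}$ and $R_0(\hat\phi_{k_s^*})>\alpha$, which in the case $t_{\mathrm{CS}}<F^{-1}(1-\alpha)$ equals the probability that $T_{(1)}\le t_{\mathrm{CS}}$ instead of 1. The statement above fails without it. *)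

(* Defs.v *)
From HB Require Import structures.
From mathcomp Require Import all_boot all_order all_algebra.
From mathcomp Require Import all_classical all_reals all_analysis.
Set Implicit Arguments. Unset Strict Implicit. Unset Printing Implicit Defensive.
Import Order.TTheory GRing.Theory Num.Theory.
Local Open Scope classical_set_scope.
Local Open Scope ring_scope.

Section Defs.
Context {R : realType}.

Definition condprob {d} {T : measurableType d} (P : probability T R)
  (A B : set T) : R := fine (P (A `&` B)) / fine (P B).

(* Law of X given Y = 0 (class 0 is encoded as [false]). *)
Definition class0_law {d dx} {T : measurableType d} {Xs : measurableType dx}
  (P : probability T R) (X : T -> Xs) (Y : T -> bool) (A : set Xs) : R :=
  condprob P (X @^-1` A) (Y @^-1` [set false]).

Definition R0 {d dx} {T : measurableType d} {Xs : measurableType dx}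
  (P : probability T R) (X : T -> Xs) (Y : T -> bool) (phi : Xs -> bool) : R :=
  class0_law P X Y [set x | phi x].

Definition cdf0 {d dx} {T : measurableType d} {Xs : measurableType dx}
  (P : probability T R) (X : T -> Xs) (Y : T -> bool) (s : Xs -> R) (x : R) : R :=
  class0_law P X Y [set z | s z <= x].

Definition quantile (F : R -> R) (p : R) : R := inf [set x | p <= F x].

Definition thr_classifier {dx} {Xs : measurableType dx} (s : Xs -> R) (c : R)
  : Xs -> bool := fun x => c < s x.

(* k-th order statistic (1-indexed) of the values v_0, ..., v_{m-1}. *)
Definition order_stat (m : nat) (v : 'I_m -> R) (k : nat) : R :=
  nth 0 (sort (fun a b : R => a <= b) [seq v i | i <- enum 'I_m]) k.-1.

(* k_s^* = max { k in {1..m} | T_(k) <= t }  (0 if the set is empty). *)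
Definition kstar (m : nat) (v : 'I_m -> R) (t : R) : nat :=
  \big[maxn/0%N]_(k < m | (order_stat v k.+1 <= t)%R) k.+1.

Definition mutually_independent {d dx} {T : measurableType d}
  {Xs : measurableType dx} (Q : probability T R) (m : nat) (Z : 'I_m -> T -> Xs) :=
  forall B : 'I_m -> set Xs, (forall i, measurable (B i)) ->
    fine (Q (\bigcap_(i in [set: 'I_m]) (Z i @^-1` B i))) =
    \prod_(i < m) fine (Q (Z i @^-1` B i)).

End Defs.

(* Main.v *)
Require Import Defs.
From HB Require Import structures.
From mathcomp Require Import all_boot all_order all_algebra.
From mathcomp Require Import all_classical all_reals all_analysis.
From mathcomp Require Import lra measurable_realfun.
Import Order.TTheory GRing.Theory Num.Theory.
Local Open Scope classical_set_scope.
Local Open Scope ring_scope.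

Lemma mu_bigcup_sup (R : realType) d (T : measurableType d) (mu : {measure set T -> \bar R})
  (A : (set T)^nat) : (forall n, measurable (A n)) -> nondecreasing_seq A ->
  mu (\bigcup_n A n) = ereal_sup (range (mu \o A)).
Proof.
move=> mA ndA.
have h1 := nondecreasing_cvg_mu (mu:=mu) mA (bigcupT_measurable A mA) ndA.
have nd : nondecreasing_seq (mu \o A).
  by move=> n k nk /=; apply: le_measure; rewrite ?inE //; exact/subsetPset/ndA.
have h2 := ereal_nondecreasing_cvgn nd.
exact: (cvg_unique _ h1 h2).
Qed.

Lemma mle (R : realType) (x : R) : measurable [set r : R | r <= x].
Proof.
have -> : [set r : R | r <= x] = [set` `]-oo, x]] by apply/seteqP; split=> r; rewrite /= in_itv.
exact: measurable_itv.
Qed.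
Lemma mlt (R : realType) (x : R) : measurable [set r : R | r < x].
Proof.
have -> : [set r : R | r < x] = [set` `]-oo, x[] by apply/seteqP; split=> r; rewrite /= in_itv.
exact: measurable_itv.
Qed.
Lemma mgt (R : realType) (x : R) : measurable [set r : R | x < r].
Proof.
have -> : [set r : R | x < r] = [set` `]x, +oo[] by apply/seteqP; split=> r; rewrite /= in_itv /= andbT.
exact: measurable_itv.
Qed.

Arguments mle {R}. Arguments mlt {R}. Arguments mgt {R}.
Section OS.
Variable R : realType.

Lemma os_def (m : nat) (v : 'I_m -> R) t : (0 < m)%N ->
  (order_stat v 1 <= t) <-> (exists i, v i <= t).
Proof.
move=> m0; rewrite /order_stat /=.
set s := sort _ _.
have szs : size s = m by rewrite size_sort size_map size_enum_ord.
have srt : sorted (fun a b : R => a <= b) s by apply: sort_sorted => a b; exact: le_total.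
split.
- move=> h.
  have : nth 0 s 0 \in s by apply: mem_nth; rewrite szs.
  rewrite mem_sort => /mapP [i _ ei]; exists i; by rewrite -ei.
- move=> [i vi].
  have : v i \in s by rewrite mem_sort; apply: map_f; rewrite mem_enum.
  move=> /(nthP 0) [j jlt ej].
  apply: le_trans vi; rewrite -ej; apply: (sorted_leq_nth le_trans lexx) => //; by rewrite inE szs.
Qed.

Lemma os_kstar (m : nat) (v : 'I_m -> R) t : (exists i, v i <= t) ->
  let c := order_stat v (kstar v t) in
  [/\ c <= t, exists i0, c = v i0 & forall i, v i <= t -> v i <= c].
Proof.
move=> [i vi] /=; rewrite /order_stat /kstar.
set s := sort _ _.
have szs : size s = m by rewrite size_sort size_map size_enum_ord.
have srt : sorted (fun a b : R => a <= b) s by apply: sort_sorted => a b; exact: le_total.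
have : v i \in s by rewrite mem_sort; apply: map_f; rewrite mem_enum.
move=> /(nthP 0) [j jlt ej].
rewrite szs in jlt.
pose P := [pred k : 'I_m | order_stat v k.+1 <= t].
have cj : P (Ordinal jlt) by rewrite /P /= /order_stat /= -/s ej.
have : (0 < #|P|)%N by apply/card_gt0P; exists (Ordinal jlt).
move=> /(eq_bigmax_cond (fun k : 'I_m => k.+1)) [k0 Pk0 E].
rewrite [X in nth _ _ X.-1]E /=.
have Pk0' := Pk0; rewrite unfold_in /P /= /order_stat -/s /= in Pk0'.
split => //.
- have : nth 0 s k0 \in s by apply: mem_nth; rewrite szs.
  rewrite mem_sort => /mapP [i0 _ ei]; by exists i0.
- move=> i1 vi1.
  have : v i1 \in s by rewrite mem_sort; apply: map_f; rewrite mem_enum.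
  move=> /(nthP 0) [j1 j1lt ej1].
  rewrite szs in j1lt.
  have P1 : P (Ordinal j1lt) by rewrite /P /= /order_stat /= -/s ej1.
  have := @leq_bigmax_cond _ P (fun k : 'I_m => k.+1) _ P1 => /=.
  rewrite E ltnS => jk.
  rewrite -ej1; apply: (sorted_leq_nth le_trans lexx) => //; rewrite inE szs //.
Qed.
End OS.
Arguments os_kstar {R m v t}.


Section Pop.
Variables (R : realType) (d0 : measure_display) (Omega0 : measurableType d0)
  (P : probability Omega0 R) (dx : measure_display) (Xs : measurableType dx)
  (X : Omega0 -> Xs) (Y : Omega0 -> bool)
  (mX : measurable_fun setT X) (mY0 : measurable (Y @^-1` [set false]))
  (PY0 : (0 < P (Y @^-1` [set false]))%E)
  (s : Xs -> R) (ms : measurable_fun setT s).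

Local Notation Y0 := (Y @^-1` [set false]).
Definition pre (G : set R) := X @^-1` (s @^-1` G) `&` Y0.
Definition mu0 (G : set R) := class0_law P X Y (s @^-1` G).
Let c0 := fine (P Y0).

Lemma c0_gt0 : 0 < c0.
Proof.
apply: fine_gt0; rewrite PY0 /=.
by apply: (le_lt_trans (probability_le1 P mY0)); rewrite ltry.
Qed.

Lemma mpre G : measurable G -> measurable (pre G).
Proof.
move=> mG; apply: measurableI => //.
have := measurableT_comp ms mX measurableT mG; by rewrite setTI.
Qed.

Lemma mu0E G : mu0 G = fine (P (pre G)) / c0.
Proof. by []. Qed.

Lemma preE G : measurable G -> P (pre G) = (fine (P (pre G)))%:E.
Proof. by move=> mG; rewrite fineK // fin_num_measure //; exact: mpre. Qed.

Lemma mu0_ge0 G : 0 <= mu0 G.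
Proof. by rewrite mu0E divr_ge0 // ?fine_ge0 // ltW // c0_gt0. Qed.

Lemma mu0_le G H : measurable G -> measurable H -> G `<=` H -> mu0 G <= mu0 H.
Proof.
move=> mG mH GH; rewrite !mu0E; apply: ler_wpM2r; first by rewrite invr_ge0 ltW // c0_gt0.
apply: fine_le; rewrite ?inE ?fin_num_measure //; try exact: mpre.
apply: le_measure; rewrite ?inE; try exact: mpre.
by move=> w [a b]; split => //; apply: GH.
Qed.

Lemma mu0_U G H : measurable G -> measurable H -> G `&` H = set0 ->
  mu0 (G `|` H) = mu0 G + mu0 H.
Proof.
move=> mG mH GH; rewrite !mu0E -mulrDl; congr (_ / _).
have -> : pre (G `|` H) = pre G `|` pre H.
  by apply/seteqP; split => w /=; rewrite /pre /=; tauto.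
rewrite measureU; try exact: mpre.
  by rewrite fineD // fin_num_measure //; exact: mpre.
apply/seteqP; split => // w [[a _] [b _]].
by have : (G `&` H) (s (X w)) by []; rewrite GH.
Qed.

Lemma mu0T : mu0 setT = 1.
Proof.
rewrite mu0E /pre /= preimage_setT preimage_setT setTI divff //.
by have := c0_gt0; rewrite lt0r => /andP[].
Qed.

Lemma mu0_compl x : mu0 [set r | r <= x] + mu0 [set r | x < r] = 1.
Proof.
rewrite -mu0_U; [|exact: mle|exact: mgt|]; last first.
  by apply/seteqP; split => // r [/= a b]; move: (le_lt_trans a b); rewrite ltxx.
rewrite -(mu0T); congr mu0; apply/seteqP; split => // r _ /=.
by case: (leP r x); [left|right].
Qed.

Lemma F_nd : {homo (fun x => mu0 [set r | r <= x]) : x y / x <= y}.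
Proof.
move=> x y xy; apply: mu0_le; [exact: mle|exact: mle|] => r /= rx; exact: le_trans xy.
Qed.


Lemma fineP G : measurable G -> fine (P (pre G)) = mu0 G * c0.
Proof.
move=> _; rewrite mu0E -mulrA mulVf ?mulr1 //.
by have := c0_gt0; rewrite lt0r => /andP[].
Qed.

Lemma F_small beta : 0 < beta -> exists x, mu0 [set r | r <= x] < beta.
Proof.
move=> b0.
pose A n := pre [set r | - (n%:R) < r].
have mA n : measurable (A n) by apply: mpre; exact: mgt.
have ndA : nondecreasing_seq A.
  move=> n k nk; apply/subsetPset => w [/= h1 h2]; split => //=.
  apply: le_lt_trans h1; by rewrite lerN2 ler_nat.
have UA : \bigcup_n A n = pre setT.
  apply/seteqP; split => w.
    by move=> [n _ [_ h]]; split.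
  move=> [_ h]; exists (Num.bound (- s (X w))) => //; split => //=.
  by rewrite ltrNl; exact: unstable.ltr_bound.
have := @mu_bigcup_sup _ _ _ P A mA ndA; rewrite UA => E.
have : ((c0 * (1 - beta))%:E < P (pre setT))%E.
  rewrite preE; last exact: measurableT.
  rewrite lte_fin fineP; last exact: measurableT.
  rewrite mu0T mul1r -[ltRHS]mulr1 ltr_pM2l ?c0_gt0 //.
  by rewrite ltrBlDr ltrDl.
rewrite E => /ereal_sup_gt [_ [n _ <-]] /=.
rewrite preE ?lte_fin ?fineP; [|exact: mgt|exact: mgt].
rewrite mulrC ltr_pM2r ?c0_gt0 // => h.
exists (- n%:R); move: (mu0_compl (- n%:R)).
move: h; set a := mu0 _; set b := mu0 _ => h e; lra.
Qed.

Lemma F_left q beta : (forall z, z < q -> mu0 [set r | r <= z] < beta) ->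
  mu0 [set r | r < q] <= beta.
Proof.
move=> h.
pose A n := pre [set r | r <= q - n.+1%:R^-1].
have mA n : measurable (A n) by apply: mpre; exact: mle.
have ndA : nondecreasing_seq A.
  move=> n k nk; apply/subsetPset => w [/= h1 h2]; split => //=.
  apply: le_trans h1 _; rewrite lerD2l lerN2 lef_pV2 ?posrE ?ler_nat //.
have UA : \bigcup_n A n = pre [set r | r < q].
  apply/seteqP; split => w.
    move=> [n _ [/= h1 h2]]; split => //=.
    by apply: le_lt_trans h1 _; rewrite ltrBlDr ltrDl invr_gt0 ltr0n.
  move=> [/= h1 h2]; have [k hk] := ltr_add_invr h1.
  exists k => //; split => //=; rewrite lerBrDr ltW //.
have := @mu_bigcup_sup _ _ _ P A mA ndA; rewrite UA => E.
have : (P (pre [set r : R | (r < q)%R]) <= (beta * c0)%:E)%E.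
  rewrite E; apply: ge_ereal_sup => _ [n _ <-] /=.
  rewrite preE ?lte_fin ?fineP ?lee_fin; [|exact: mle|exact: mle].
  rewrite ler_pM2r ?c0_gt0 //; apply/ltW/h.
  by rewrite ltrBlDr ltrDl invr_gt0 ltr0n.
rewrite preE ?lee_fin ?fineP; [|exact: mlt|exact: mlt].
by rewrite ler_pM2r ?c0_gt0.
Qed.


Lemma prop4_sec (tCS : R)
  (m : nat) (m_gt0 : (0 < m)%N)
  (d : measure_display) (Omega : measurableType d) (Q : probability Omega R)
  (X0 : 'I_m -> Omega -> Xs)
  (mX0 : forall i, measurable_fun setT (X0 i))
  (law0 : forall i (A : set Xs), measurable A ->
            fine (Q (X0 i @^-1` A)) = class0_law P X Y A)
  (indep : mutually_independent Q X0) :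
  let F := cdf0 P X Y s in
  let T := fun (w : Omega) (i : 'I_m) => s (X0 i w) in
  let defined := fun w => order_stat (T w) 1 <= tCS in
  let R0surr := fun w =>
      R0 P X Y (thr_classifier s (order_stat (T w) (kstar (T w) tCS))) in
  let R0CS := R0 P X Y (thr_classifier s tCS) in
  (forall w, defined w -> R0CS <= R0surr w) /\
  (forall alpha : R, 0 < alpha < 1 ->
     (tCS < quantile F (1 - alpha) ->
        Q [set w | defined w /\ alpha < R0surr w] = Q [set w | defined w]) /\
     (quantile F (1 - alpha) <= tCS ->
        (Q [set w | defined w /\ (alpha < R0surr w)%R] <=
         ((2 - alpha - F tCS) ^+ m - (1 - F tCS) ^+ m)%:E)%E)).
Proof.
move=> F T defined R0surr R0CS.
have FE x : F x = mu0 [set r | r <= x] by [].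
have RE x : R0 P X Y (thr_classifier s x) = 1 - F x.
  by have := mu0_compl x; rewrite -FE => e; rewrite -e addrAC subrr add0r.
have defE w : defined w <-> exists i, T w i <= tCS by exact: os_def.
pose c w := order_stat (T w) (kstar (T w) tCS).
have RsE w : R0surr w = 1 - F (c w) by rewrite /R0surr RE.
split.
  move=> w /defE dw; rewrite /R0CS RE RsE lerD2l lerN2.
  have [ct _ _] := os_kstar dw.
  by rewrite !FE; apply: F_nd.
move=> alpha /andP[a0 a1].
pose beta := 1 - alpha.
have b0 : 0 < beta by rewrite subr_gt0.
have [x0 Fx0] := @F_small _ b0.
pose S := [set x | beta <= F x].
have lbS : has_lbound S.
  exists x0 => y Sy; rewrite leNgt; apply/negP => yx.
  have := F_nd _ _ (ltW yx); rewrite -!FE => h.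
  by move: (le_lt_trans h Fx0); rewrite ltNge Sy.
have qE : quantile F (1 - alpha) = inf S by [].
have Q1 z : z < inf S -> F z < beta.
  move=> zq; rewrite ltNge; apply/negP => Sz.
  by have := ge_inf lbS Sz; rewrite leNgt zq.
have Q2 z : S !=set0 -> inf S < z -> beta <= F z.
  move=> S0 /(inf_lt S0) [y Sy yz].
  apply: le_trans Sy _; rewrite !FE; exact/F_nd/ltW.
rewrite qE; split.
  move=> tq; congr (Q _); apply/seteqP; split; first by move=> w [].
  move=> w dw; split => //.
  have [ct _ _] := os_kstar (proj1 (defE w) dw).
  rewrite RsE; have := Q1 (c w) (le_lt_trans ct tq).
  rewrite /beta => h; lra.
move=> qt.
have Fnd' x y : x <= y -> F x <= F y by move=> h; exact: F_nd _ _ h.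
pose D := [set r | r <= tCS /\ F r < beta].
have mF : measurable_fun setT F by apply: nondecreasing_measurable => //; exact: Fnd'.
have mD : measurable D.
  have -> : D = [set r | r <= tCS] `&` (setT `&` F @^-1` [set y | y < beta]).
    by apply/seteqP; split => r /=; [move=> [a b]|move=> [a [_ b]]].
  apply: measurableI; first exact: mle.
  exact: mF measurableT _ (mlt beta).
pose B := [set r | tCS < r] `|` D.
have mB : measurable B by apply: measurableU; [exact: mgt|exact: mD].
have muB : mu0 B = (1 - F tCS) + mu0 D.
  rewrite /B mu0_U; [|exact: mgt|exact: mD|].
    by rewrite -RE.
  by apply/seteqP; split => // r [/= a [b _]]; move: (lt_le_trans a b); rewrite ltxx.
have muD : mu0 D <= beta.
  case: (pselect (S !=set0)) => [S0|S0].
  - case: (ltP (F (inf S)) beta) => hq.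
    + apply: le_trans (ltW hq); rewrite FE; apply: mu0_le => //; first exact: mle.
      move=> r [rt Fr] /=; rewrite leNgt; apply/negP => qr.
      by have := Q2 r S0 qr; rewrite leNgt Fr.
    + apply: le_trans (F_left _ _ Q1); apply: mu0_le => //; first exact: mlt.
      move=> r [rt Fr] /=; rewrite ltNge; apply/negP => qr.
      have := Fnd' _ _ qr; move: hq Fr; rewrite -/(F r); lra.
  - have Ft : F tCS < beta.
      by rewrite ltNge; apply/negP => h; apply: S0; exists tCS.
    apply: le_trans (ltW Ft); rewrite FE; apply: mu0_le => //; first exact: mle.
    by move=> r [].
have pre_m (G : set R) : measurable G -> measurable (s @^-1` G).
  by move=> mG; have := ms measurableT _ mG; rewrite setTI.
have pre_m2 (G : set R) : measurable G -> forall i, measurable (X0 i @^-1` (s @^-1` G)).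
  by move=> mG i; have := mX0 i measurableT _ (pre_m G mG); rewrite setTI.
pose AllB := \bigcap_(i in [set: 'I_m]) (X0 i @^-1` (s @^-1` B)).
pose AllG := \bigcap_(i in [set: 'I_m]) (X0 i @^-1` (s @^-1` [set r | tCS < r])).
have mAllB : measurable AllB by apply: fin_bigcap_measurable; [exact: finite_finset|] => i _; exact: pre_m2.
have mAllG : measurable AllG by apply: fin_bigcap_measurable; [exact: finite_finset|] => i _; apply: pre_m2; exact: mgt.
have QB : fine (Q AllB) = mu0 B ^+ m.
  have h := indep (fun=> s @^-1` B) (fun=> pre_m B mB).
  rewrite /AllB h (eq_bigr (fun=> mu0 B)); last by move=> i _; rewrite law0 //; exact: pre_m.
  by rewrite prodr_const card_ord.
have QG : fine (Q AllG) = (1 - F tCS) ^+ m.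
  have h := indep (fun=> s @^-1` [set r | tCS < r]) (fun=> pre_m _ (mgt tCS)).
  transitivity (\prod_(i < m) fine (Q (X0 i @^-1` (s @^-1` [set r | tCS < r])))); first exact: h.
  rewrite (eq_bigr (fun=> mu0 [set r | tCS < r])); last by move=> i _; rewrite law0 //; apply: pre_m; exact: mgt.
  by rewrite prodr_const card_ord -RE.
have EE : [set w | defined w /\ alpha < R0surr w] = AllB `\` AllG.
  apply/seteqP; split => w.
    move=> [dw aw]; have dw' := proj1 (defE w) dw.
    have [ct [i0 ci0] cmax] := os_kstar dw'.
    have Fc : F (c w) < beta by move: aw; rewrite RsE /beta; lra.
    split.
      move=> i _ /=; case: (ltP tCS (T w i)) => h; [by left|right].
      by split => //; apply: le_lt_trans (Fnd' _ _ (cmax i h)) Fc.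
    move=> allG; case: dw' => i hi; have := allG i I; rewrite /= ltNge.
    by rewrite -/(T w i) hi.
  move=> [allB nG].
  have dw' : exists i, T w i <= tCS.
    apply: contra_notP nG => h i _; rewrite /= ltNge; apply/negP => hi; apply: h.
    by exists i.
  split; first exact: (proj2 (defE w) dw').
  have [ct [i0 ci0] _] := os_kstar dw'.
  have := allB i0 I; rewrite /= -/(T w i0) -ci0 => -[h|[_ h]].
    by move: (le_lt_trans ct h); rewrite ltxx.
  by rewrite RsE; move: h; rewrite -/(c w) /beta; lra.
rewrite EE measureD //; last first.
  by apply: (le_lt_trans (probability_le1 Q mAllB)); rewrite ltry.
have -> : AllB `&` AllG = AllG.
  apply/seteqP; split => w; first by move=> [].
  by move=> h; split => // i _; left; exact: h.
rewrite -(fineK (fin_num_measure Q _ mAllB)) -(fineK (fin_num_measure Q _ mAllG)).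
rewrite -EFinB lee_fin QB QG lerD2r.
have B0 := mu0_ge0 B.
apply: lerXn2r; rewrite ?nnegrE //; move: muB muD B0; rewrite /beta; lra.
Qed.

End Pop.

Theorem proposition4 (R : realType)
  (* population: (X, Y) on a probability space, X in the feature space Xs *)
  (d0 : measure_display) (Omega0 : measurableType d0) (P : probability Omega0 R)
  (dx : measure_display) (Xs : measurableType dx)
  (X : Omega0 -> Xs) (Y : Omega0 -> bool)
  (mX : measurable_fun setT X) (mY0 : measurable (Y @^-1` [set false]))
  (PY0 : (0 < P (Y @^-1` [set false]))%E)
  (* fixed scoring function and threshold *)
  (s : Xs -> R) (ms : measurable_fun setT s) (tCS : R)
  (* left-out class-0 sample of size m, on its own probability space *)
  (m : nat) (m_gt0 : (0 < m)%N)
  (d : measure_display) (Omega : measurableType d) (Q : probability Omega R)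
  (X0 : 'I_m -> Omega -> Xs)
  (mX0 : forall i, measurable_fun setT (X0 i))
  (law0 : forall i (A : set Xs), measurable A ->
            fine (Q (X0 i @^-1` A)) = class0_law P X Y A)
  (indep : mutually_independent Q X0) :
  let F := cdf0 P X Y s in
  let T := fun (w : Omega) (i : 'I_m) => s (X0 i w) in
  let defined := fun w => order_stat (T w) 1 <= tCS in
  let R0surr := fun w =>
      R0 P X Y (thr_classifier s (order_stat (T w) (kstar (T w) tCS))) in
  let R0CS := R0 P X Y (thr_classifier s tCS) in
  (forall w, defined w -> R0CS <= R0surr w) /\
  (forall alpha : R, 0 < alpha < 1 ->
     (tCS < quantile F (1 - alpha) ->
        Q [set w | defined w /\ alpha < R0surr w] = Q [set w | defined w]) /\
     (quantile F (1 - alpha) <= tCS ->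
        (Q [set w | defined w /\ (alpha < R0surr w)%R] <=
         ((2 - alpha - F tCS) ^+ m - (1 - F tCS) ^+ m)%:E)%E)).
Proof.
exact: prop4_sec.
Qed.
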